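(* Let $\mathcal F_0=\{6\times1,\,1\times6,\,3\times3\}$ (closed axis-parallel rectangles). Let $\Lambda$ be an $\mathcal F_0$-piercing lattice with vector basis $u=[a,b]$, $v=[c,-d]$, where $a,b,c,d\ge0$ and $b>0$, and suppose $\Lambda$ has minimum density $1/A$ among all $\mathcal F_0$-piercing lattices, where $A=ad+bc$. Then $A\le\frac{31}{6}$.
   Context: A point set is $\mathcal F_0$-piercing if every translate of every rectangle in $\mathcal F_0$ contains one of its points. A lattice $\{iu+jv:i,j\in\mathbb Z\}$ has density $1/|\det[u,v]|$. *)

(* Defs.v *)
From Stdlib Require Import Reals List.
Open Scope R_scope.

Definition in_lattice (u1 u2 v1 v2 x y : R) : Prop :=
  exists i j : Z, x = IZR i * u1 + IZR j * v1 /\ y = IZR i * u2 + IZR j * v2.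

Definition det2 (u1 u2 v1 v2 : R) : R := u1 * v2 - u2 * v1.

Definition is_lattice_basis (u1 u2 v1 v2 : R) : Prop := det2 u1 u2 v1 v2 <> 0.

Definition lattice_density (u1 u2 v1 v2 : R) : R := 1 / Rabs (det2 u1 u2 v1 v2).

(* A rectangle of width w and height h, given as the pair (w, h);
   its translates are the closed boxes [x0, x0 + w] x [y0, y0 + h]. *)
Definition F0 : list (R * R) := (6, 1) :: (1, 6) :: (3, 3) :: nil.

Definition F0_piercing (u1 u2 v1 v2 : R) : Prop :=
  forall r, In r F0 -> forall x0 y0 : R,
    exists x y : R, in_lattice u1 u2 v1 v2 x y /\
      x0 <= x <= x0 + fst r /\ y0 <= y <= y0 + snd r.

(* Main.v *)
Require Import Defs.
From Stdlib Require Import Reals List Lra Psatz ZArith Lia Classical.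
Open Scope R_scope.
Lemma eps_list (l : list R) : exists e, 0 < e /\ forall z, In z l -> 0 < z -> e < z.
Proof.
  induction l as [|z l [e [He H]]].
  - exists 1. split; [lra|]. intros z [].
  - destruct (Rlt_dec 0 z) as [Hz|Hz].
    + exists (Rmin e (z/2)). split.
      * apply Rmin_glb_lt; lra.
      * intros w [<-|Hw] Hw0.
        -- assert (Rmin e (z/2) <= z/2) by apply Rmin_r. lra.
        -- assert (Rmin e (z/2) <= e) by apply Rmin_l. specialize (H w Hw Hw0). lra.
    + exists e. split; [exact He|]. intros w [<-|Hw] Hw0; [lra|auto].
Qed.

Definition zrange (N : nat) : list Z :=
  map (fun k => (Z.of_nat k - Z.of_nat N)%Z) (seq 0 (2*N+1)).

Lemma zrange_in (N : nat) (i : Z) : (- Z.of_nat N <= i <= Z.of_nat N)%Z -> In i (zrange N).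
Proof.
  intros H. unfold zrange. apply in_map_iff.
  exists (Z.to_nat (i + Z.of_nat N)). split.
  - rewrite Z2Nat.id; lia.
  - apply in_seq. lia.
Qed.

Definition lpts (u1 u2 v1 v2 : R) (N : nat) : list (R*R) :=
  flat_map (fun i => map (fun j => (IZR i * u1 + IZR j * v1, IZR i * u2 + IZR j * v2)) (zrange N)) (zrange N).

Lemma coef_bound (u1 u2 v1 v2 R0 : R) : det2 u1 u2 v1 v2 <> 0 ->
  exists N : nat, forall x y, in_lattice u1 u2 v1 v2 x y -> Rabs x <= R0 -> Rabs y <= R0 ->
    In (x, y) (lpts u1 u2 v1 v2 N).
Proof.
  intros Hd.
  set (B := (Rabs R0 * (Rabs u1 + Rabs u2 + Rabs v1 + Rabs v2)) / Rabs (det2 u1 u2 v1 v2)).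
  destruct (archimed B) as [HB _].
  exists (Z.to_nat (up B)).
  intros x y [i [j [Hx Hy]]] Hx0 Hy0.
  assert (Hdp : 0 < Rabs (det2 u1 u2 v1 v2)) by (apply Rabs_pos_lt; exact Hd).
  assert (Ei : IZR i * det2 u1 u2 v1 v2 = x * v2 - y * v1) by (unfold det2; subst; ring).
  assert (Ej : IZR j * det2 u1 u2 v1 v2 = u1 * y - u2 * x) by (unfold det2; subst; ring).
  assert (Hbi : Rabs (IZR i) <= B).
  { unfold B. apply Rmult_le_reg_r with (Rabs (det2 u1 u2 v1 v2)); [exact Hdp|].
    unfold Rdiv. rewrite Rmult_assoc, Rinv_l by lra. rewrite Rmult_1_r.
    rewrite <- Rabs_mult, Ei.
    assert (HR : 0 <= Rabs R0) by apply Rabs_pos.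
    assert (Rabs (x*v2 - y*v1) <= Rabs x * Rabs v2 + Rabs y * Rabs v1).
    { unfold Rminus. eapply Rle_trans; [apply Rabs_triang|]. rewrite Rabs_Ropp, !Rabs_mult. lra. }
    assert (Rabs x <= Rabs R0) by (eapply Rle_trans; [exact Hx0| apply Rle_abs]).
    assert (Rabs y <= Rabs R0) by (eapply Rle_trans; [exact Hy0| apply Rle_abs]).
    pose proof (Rabs_pos u1); pose proof (Rabs_pos u2); pose proof (Rabs_pos v1); pose proof (Rabs_pos v2).
    pose proof (Rabs_pos x); pose proof (Rabs_pos y).
    nra. }
  assert (Hbj : Rabs (IZR j) <= B).
  { unfold B. apply Rmult_le_reg_r with (Rabs (det2 u1 u2 v1 v2)); [exact Hdp|].
    unfold Rdiv. rewrite Rmult_assoc, Rinv_l by lra. rewrite Rmult_1_r.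
    rewrite <- Rabs_mult, Ej.
    assert (HR : 0 <= Rabs R0) by apply Rabs_pos.
    assert (Rabs (u1*y - u2*x) <= Rabs u1 * Rabs y + Rabs u2 * Rabs x).
    { unfold Rminus. eapply Rle_trans; [apply Rabs_triang|]. rewrite Rabs_Ropp, !Rabs_mult. lra. }
    assert (Rabs x <= Rabs R0) by (eapply Rle_trans; [exact Hx0| apply Rle_abs]).
    assert (Rabs y <= Rabs R0) by (eapply Rle_trans; [exact Hy0| apply Rle_abs]).
    pose proof (Rabs_pos u1); pose proof (Rabs_pos u2); pose proof (Rabs_pos v1); pose proof (Rabs_pos v2).
    pose proof (Rabs_pos x); pose proof (Rabs_pos y).
    nra. }
  assert (HB0 : 0 <= B) by (eapply Rle_trans; [apply Rabs_pos|exact Hbi]).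
  assert (Hup : (0 <= up B)%Z) by (apply le_IZR; lra).
  assert (Hi : (- up B <= i <= up B)%Z).
  { pose proof (Rle_abs (IZR i)). pose proof (Rle_abs (- IZR i)). rewrite Rabs_Ropp in *. split; apply le_IZR; rewrite ?opp_IZR; lra. }
  assert (Hj : (- up B <= j <= up B)%Z).
  { pose proof (Rle_abs (IZR j)). pose proof (Rle_abs (- IZR j)). rewrite Rabs_Ropp in *. split; apply le_IZR; rewrite ?opp_IZR; lra. }
  unfold lpts. apply in_flat_map. exists i. split.
  - apply zrange_in. rewrite Z2Nat.id; lia.
  - apply in_map_iff. exists j. split.
    + subst. reflexivity.
    + apply zrange_in. rewrite Z2Nat.id; lia.
Qed.
Lemma dIVT (P : nat -> Prop) (K : nat) : P 0%nat -> P K \/ exists k, (k < K)%nat /\ P k /\ ~ P (S k).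
Proof.
  intros H0. induction K as [|K IH].
  - left; exact H0.
  - destruct IH as [HK|[k [Hk [Pk nPk]]]].
    + destruct (classic (P (S K))) as [HS|HS].
      * left; exact HS.
      * right. exists K. repeat split; auto.
    + right. exists k. repeat split; auto.
Qed.

Lemma pair_lemma (u1 u2 v1 v2 W Hh : R) : det2 u1 u2 v1 v2 <> 0 -> 0 < W -> 0 < Hh ->
  (forall x0 y0, exists x y, in_lattice u1 u2 v1 v2 x y /\ x0 <= x <= x0 + W /\ y0 <= y <= y0 + Hh) ->
  exists x1 y1 x2 y2, in_lattice u1 u2 v1 v2 x1 y1 /\ in_lattice u1 u2 v1 v2 x2 y2 /\
    0 < x1 <= W /\ 0 < x2 <= W /\ 0 <= y1 /\ y2 <= 0 /\ y1 - y2 <= Hh /\ x1*y2 - y1*x2 <> 0.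
Proof.
  intros Hd HW HH Hp.
  set (R0 := W + Hh + 1).
  destruct (coef_bound u1 u2 v1 v2 R0 Hd) as [N HN].
  set (pts := lpts u1 u2 v1 v2 N).
  set (l := map fst pts ++ map (fun p => fst p - W) pts ++ map (fun p => snd p - Hh) pts
            ++ flat_map (fun p => map (fun p' => snd p - snd p' - Hh) pts) pts).
  destruct (eps_list l) as [e0 [He0 Hl]].
  set (e := Rmin e0 (1/2)).
  assert (He : 0 < e) by (apply Rmin_glb_lt; lra).
  assert (Hee0 : e <= e0) by apply Rmin_l.
  assert (Hе1 : e <= 1/2) by apply Rmin_r.
  assert (Hin : forall x y, in_lattice u1 u2 v1 v2 x y -> -R0 <= x <= R0 -> -R0 <= y <= R0 -> In (x,y) pts).
  { intros x y Hxy Hx Hy. apply HN; [exact Hxy| apply Rabs_le; lra | apply Rabs_le; lra]. }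
  assert (Lx : forall x y, In (x,y) pts -> 0 < x -> e < x).
  { intros x y H H0. assert (e0 < x); [|lra]. apply Hl; [|exact H0].
    unfold l. apply in_or_app. left. apply in_map_iff. exists (x,y). auto. }
  assert (LW : forall x y, In (x,y) pts -> 0 < x - W -> e < x - W).
  { intros x y H H0. assert (e0 < x - W); [|lra]. apply Hl; [|exact H0].
    unfold l. apply in_or_app. right. apply in_or_app. left. apply in_map_iff. exists (x,y). auto. }
  assert (LH : forall x y, In (x,y) pts -> 0 < y - Hh -> e < y - Hh).
  { intros x y H H0. assert (e0 < y - Hh); [|lra]. apply Hl; [|exact H0].
    unfold l. apply in_or_app. right. apply in_or_app. right. apply in_or_app. left.
    apply in_map_iff. exists (x,y). auto. }
  assert (LD : forall x y x' y', In (x,y) pts -> In (x',y') pts -> 0 < y - y' - Hh -> e < y - y' - Hh).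
  { intros x y x' y' H H' H0. assert (e0 < y - y' - Hh); [|lra]. apply Hl; [|exact H0].
    unfold l. apply in_or_app. right. apply in_or_app. right. apply in_or_app. right.
    apply in_flat_map. exists (x,y). split; [exact H|]. apply in_map_iff. exists (x',y'). auto. }
  assert (Q : forall y0, -Hh - 1 <= y0 <= 1 -> exists x y, in_lattice u1 u2 v1 v2 x y /\ In (x,y) pts /\
            0 < x <= W /\ y0 <= y <= y0 + Hh).
  { intros y0 Hy0. destruct (Hp e y0) as [x [y [Hxy [Hx Hy]]]].
    assert (Hi : In (x,y) pts) by (apply Hin; [exact Hxy| unfold R0; lra | unfold R0; lra]).
    exists x, y. repeat split; try assumption; try lra.
    destruct (Rle_dec x W) as [|Hn]; [assumption|].
    exfalso. assert (e < x - W) by (apply (LW x y Hi); lra). lra. }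
  destruct (archimed (Hh / e)) as [HK _].
  set (K := Z.to_nat (up (Hh / e))).
  assert (HKpos : 0 < Hh / e) by (apply Rdiv_lt_0_compat; lra).
  assert (HK' : Hh / e < INR K).
  { unfold K. rewrite INR_IZR_INZ, Z2Nat.id; [lra|]. apply le_IZR. lra. }
  assert (HK0 : 0 < INR K) by lra.
  set (s := fun k : nat => Hh * INR k / INR K).
  assert (Hstep : forall k, s (S k) - s k < e).
  { intros k. unfold s. rewrite S_INR.
    replace (Hh * (INR k + 1) / INR K - Hh * INR k / INR K) with (Hh / INR K) by (field; lra).
    apply Rmult_lt_reg_r with (INR K); [lra|].
    unfold Rdiv. rewrite Rmult_assoc, Rinv_l by lra. rewrite Rmult_1_r.
    apply Rmult_lt_reg_l with (/ e); [apply Rinv_0_lt_compat; lra|].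
    rewrite <- Rmult_assoc, Rinv_l, Rmult_1_l by lra. rewrite Rmult_comm. exact HK'. }
  assert (Hs0 : forall k, (k <= K)%nat -> 0 <= s k <= Hh).
  { intros k Hk. unfold s. apply le_INR in Hk. pose proof (pos_INR k).
    split.
    - apply Rmult_le_pos; [nra| left; apply Rinv_0_lt_compat; lra].
    - apply Rmult_le_reg_r with (INR K); [lra|]. unfold Rdiv. rewrite Rmult_assoc, Rinv_l by lra. nra. }
  set (PP := fun k => exists x y, in_lattice u1 u2 v1 v2 x y /\ 0 < x <= W /\ 0 <= y <= Hh - s k).
  assert (P0 : PP 0%nat).
  { destruct (Q 0) as [x [y [Hxy [_ [Hx Hy]]]]]; [lra|].
    exists x, y. assert (s 0%nat = 0) by (unfold s; simpl; unfold Rdiv; ring). repeat split; try assumption; try lra. }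
  destruct (dIVT PP K P0) as [PK|[k [Hk [Pk nPk]]]].
  - destruct PK as [xw [yw [Hw [Hxw Hyw]]]].
    assert (EK : s K = Hh) by (unfold s; field; lra).
    rewrite EK in Hyw.
    destruct (Q e) as [x [y [Hxy [Hi [Hx Hy]]]]]; [lra|].
    assert (Hy' : y <= Hh).
    { destruct (Rle_dec y Hh) as [|Hn]; [assumption|]. exfalso.
      assert (e < y - Hh) by (apply (LH x y Hi); lra). lra. }
    exists x, y, xw, yw. repeat split; try assumption; try lra.
    assert (yw = 0) by lra. subst yw. nra.
  - destruct Pk as [x1 [y1 [H1 [Hx1 Hy1]]]].
    destruct (Q (- s (S k))) as [x2 [y2 [H2 [Hi2 [Hx2 Hy2]]]]].
    { pose proof (Hs0 (S k) ltac:(lia)). lra. }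
    assert (Hy2n : y2 < 0).
    { destruct (Rlt_dec y2 0) as [|Hn]; [assumption|]. exfalso. apply nPk.
      exists x2, y2. repeat split; try assumption; try lra. }
    pose proof (Hs0 k ltac:(lia)). pose proof (Hs0 (S k) ltac:(lia)). pose proof (Hstep k).
    assert (Hi1 : In (x1,y1) pts) by (apply Hin; [exact H1| unfold R0; lra | unfold R0; lra]).
    assert (Hsp : y1 - y2 <= Hh).
    { destruct (Rle_dec (y1 - y2) Hh) as [|Hn]; [assumption|]. exfalso.
      assert (e < y1 - y2 - Hh) by (apply (LD x1 y1 x2 y2 Hi1 Hi2); lra). lra. }
    exists x1, y1, x2, y2. repeat split; try assumption; try lra.
    nra.
Qed.
Lemma lat_T (u1 u2 v1 v2 x y : R) : in_lattice u2 u1 v2 v1 y x -> in_lattice u1 u2 v1 v2 x y.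
Proof. intros [i [j [H1 H2]]]. exists i, j. split; assumption. Qed.

Lemma basis_change (u1 u2 v1 v2 px py qx qy : R) :
  det2 u1 u2 v1 v2 <> 0 ->
  in_lattice u1 u2 v1 v2 px py -> in_lattice u1 u2 v1 v2 qx qy ->
  px*qy - py*qx <> 0 -> Rabs (px*qy - py*qx) < 2 * Rabs (det2 u1 u2 v1 v2) ->
  Rabs (px*qy - py*qx) = Rabs (det2 u1 u2 v1 v2) /\
  forall x y, in_lattice u1 u2 v1 v2 x y -> exists m n : Z,
     x = IZR m * px + IZR n * qx /\ y = IZR m * py + IZR n * qy.
Proof.
  intros Hd [i1 [j1 [Hpx Hpy]]] [i2 [j2 [Hqx Hqy]]] H0 H2.
  set (k := (i1*j2 - i2*j1)%Z).
  assert (Ek : px*qy - py*qx = IZR k * det2 u1 u2 v1 v2)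
    by (unfold k, det2; rewrite minus_IZR, !mult_IZR; subst; ring).
  assert (Hkpm : (k = 1 \/ k = -1)%Z).
  { rewrite Ek, Rabs_mult in H2. rewrite Ek in H0.
    assert (Hdp : 0 < Rabs (det2 u1 u2 v1 v2)) by (apply Rabs_pos_lt; exact Hd).
    assert (Hka : Rabs (IZR k) < 2) by nra.
    assert (Hk0 : k <> 0%Z) by (intro E; apply H0; rewrite E; ring).
    pose proof (Rle_abs (IZR k)). pose proof (Rle_abs (- IZR k)). rewrite Rabs_Ropp in *.
    assert (A1 : (-2 < k)%Z) by (apply lt_IZR; lra).
    assert (A2 : (k < 2)%Z) by (apply lt_IZR; lra).
    lia. }
  assert (Hk1 : IZR k * IZR k = 1) by (destruct Hkpm as [E|E]; rewrite E; lra).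
  split.
  - rewrite Ek, Rabs_mult.
    assert (Rabs (IZR k) = 1).
    { destruct Hkpm as [E|E]; rewrite E; unfold Rabs; destruct Rcase_abs; lra. }
    rewrite H. ring.
  - intros x y [i [j [Hx Hy]]].
    exists (k * (i*j2 - j*i2))%Z, (k * (j*i1 - i*j1))%Z.
    rewrite !mult_IZR, !minus_IZR, !mult_IZR.
    subst. unfold k in *. rewrite !minus_IZR, !mult_IZR in *.
    split.
    + transitivity ((IZR i1 * IZR j2 - IZR i2 * IZR j1) * (IZR i1 * IZR j2 - IZR i2 * IZR j1) * (IZR i * u1 + IZR j * v1)).
      * rewrite Hk1. ring.
      * ring.
    + transitivity ((IZR i1 * IZR j2 - IZR i2 * IZR j1) * (IZR i1 * IZR j2 - IZR i2 * IZR j1) * (IZR i * u2 + IZR j * v2)).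
      * rewrite Hk1. ring.
      * ring.
Qed.
Lemma IZR_range (m lo hi : Z) : IZR lo - 1 < IZR m -> IZR m < IZR hi + 1 -> (lo <= m <= hi)%Z.
Proof.
  intros H1 H2.
  assert (A1 : (lo - 1 < m)%Z) by (apply lt_IZR; rewrite minus_IZR; exact H1).
  assert (A2 : (m < hi + 1)%Z) by (apply lt_IZR; rewrite plus_IZR; exact H2).
  lia.
Qed.

Lemma core (x1 y1 x2 y2 : R) (m1 n1 m2 n2 a1 b1 a2 b2 : Z) :
  0 < x1 <= 6 -> 0 < x2 <= 6 -> 0 <= y1 -> 0 <= y2 -> y1 + y2 <= 1 ->
  31/6 < x1*y2 + y1*x2 ->
  0 <= IZR m1 * x1 + IZR n1 * x2 ->
  0 < IZR m1 * y1 - IZR n1 * y2 <= 6 ->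
  IZR m2 * x1 + IZR n2 * x2 <= 0 ->
  0 < IZR m2 * y1 - IZR n2 * y2 <= 6 ->
  (IZR m1 * x1 + IZR n1 * x2) - (IZR m2 * x1 + IZR n2 * x2) <= 1 ->
  (IZR m1 * x1 + IZR n1 * x2) * (IZR m2 * y1 - IZR n2 * y2)
    - (IZR m1 * y1 - IZR n1 * y2) * (IZR m2 * x1 + IZR n2 * x2) <> 0 ->
  0 < IZR a1 * x1 + IZR b1 * x2 <= 3 ->
  0 <= IZR a1 * y1 - IZR b1 * y2 ->
  0 < IZR a2 * x1 + IZR b2 * x2 <= 3 ->
  IZR a2 * y1 - IZR b2 * y2 <= 0 ->
  (IZR a1 * y1 - IZR b1 * y2) - (IZR a2 * y1 - IZR b2 * y2) <= 3 ->
  (IZR a1 * x1 + IZR b1 * x2) * (IZR a2 * y1 - IZR b2 * y2)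
    - (IZR a1 * y1 - IZR b1 * y2) * (IZR a2 * x1 + IZR b2 * x2) <> 0 ->
  False.
Proof.
  intros Hx1 Hx2 Hy1 Hy2 Hy HD Hp1 Hq1 Hp2 Hq2 Hpp HdV Hr1 Ht1 Hr2 Ht2 Htt HdS.
  set (D := x1*y2 + y1*x2) in *.
  assert (HD6 : D <= 6) by (unfold D; nra).
  set (p1 := IZR m1 * x1 + IZR n1 * x2) in *.
  set (q1 := IZR m1 * y1 - IZR n1 * y2) in *.
  set (p2 := IZR m2 * x1 + IZR n2 * x2) in *.
  set (q2 := IZR m2 * y1 - IZR n2 * y2) in *.
  assert (EV : p1*q2 - q1*p2 = IZR (m1*n2 - n1*m2) * (-D))
    by (unfold p1, q1, p2, q2, D; rewrite minus_IZR, !mult_IZR; ring).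
  assert (dV0 : 0 < p1*q2 - q1*p2) by (destruct (Rle_lt_dec (p1*q2 - q1*p2) 0); [|assumption]; exfalso; apply HdV; nra).
  assert (dV6 : p1*q2 - q1*p2 <= 6) by nra.
  assert (kV : (m1*n2 - n1*m2 = -1)%Z).
  { assert (R1 : (-1 <= m1*n2 - n1*m2 <= -1)%Z); [|lia].
    apply IZR_range; nra. }
  set (r1 := IZR a1 * x1 + IZR b1 * x2) in *.
  set (t1 := IZR a1 * y1 - IZR b1 * y2) in *.
  set (r2 := IZR a2 * x1 + IZR b2 * x2) in *.
  set (t2 := IZR a2 * y1 - IZR b2 * y2) in *.
  assert (ES : r1*t2 - t1*r2 = IZR (a1*b2 - b1*a2) * (-D))
    by (unfold r1, t1, r2, t2, D; rewrite minus_IZR, !mult_IZR; ring).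
  assert (dS0 : r1*t2 - t1*r2 < 0) by (destruct (Rle_lt_dec 0 (r1*t2 - t1*r2)); [|assumption]; exfalso; apply HdS; nra).
  assert (dS9 : -9 <= r1*t2 - t1*r2) by nra.
  assert (kS : (a1*b2 - b1*a2 = 1)%Z).
  { assert (R1 : (1 <= a1*b2 - b1*a2 <= 1)%Z); [|lia].
    apply IZR_range; nra. }
  assert (Em1 : IZR m1 * D = p1*y2 + q1*x2) by (unfold p1, q1, D; ring).
  assert (En1 : IZR n1 * D = y1*p1 - x1*q1) by (unfold p1, q1, D; ring).
  assert (Em2 : IZR m2 * D = p2*y2 + q2*x2) by (unfold p2, q2, D; ring).
  assert (En2 : IZR n2 * D = y1*p2 - x1*q2) by (unfold p2, q2, D; ring).
  assert (Ea1 : IZR a1 * D = r1*y2 + t1*x2) by (unfold r1, t1, D; ring).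
  assert (Eb1 : IZR b1 * D = y1*r1 - x1*t1) by (unfold r1, t1, D; ring).
  assert (Ea2 : IZR a2 * D = r2*y2 + t2*x2) by (unfold r2, t2, D; ring).
  assert (Eb2 : IZR b2 * D = y1*r2 - x1*t2) by (unfold r2, t2, D; ring).
  assert (Bm1 : (1 <= m1 <= 7)%Z) by (apply IZR_range; nra).
  assert (Bn1 : (-6 <= n1 <= 0)%Z) by (apply IZR_range; nra).
  assert (Bm2 : (0 <= m2 <= 6)%Z) by (apply IZR_range; nra).
  assert (Bn2 : (-7 <= n2 <= -1)%Z) by (apply IZR_range; nra).
  assert (Ba1 : (0 <= a1 <= 4)%Z) by (apply IZR_range; nra).
  assert (Bb1 : (-3 <= b1 <= 0)%Z) by (apply IZR_range; nra).
  assert (Ba2 : (-3 <= a2 <= 0)%Z) by (apply IZR_range; nra).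
  assert (Bb2 : (0 <= b2 <= 4)%Z) by (apply IZR_range; nra).
  clear Em1 En1 Em2 En2 Ea1 Eb1 Ea2 Eb2 EV ES dV0 dV6 dS0 dS9 HdV HdS HD6.
  unfold p1, q1, p2, q2, r1, t1, r2, t2, D in *.
  clear p1 q1 p2 q2 r1 t1 r2 t2 D.
  assert (Cm1 : (m1 = 1 \/ m1 = 2 \/ m1 = 3 \/ m1 = 4 \/ m1 = 5 \/ m1 = 6 \/ m1 = 7)%Z) by lia.
  destruct Cm1 as [E|[E|[E|[E|[E|[E|E]]]]]]; subst m1.
  - assert (Cn1 : (n1 = -6 \/ n1 = -5 \/ n1 = -4 \/ n1 = -3 \/ n1 = -2 \/ n1 = -1 \/ n1 = 0)%Z) by lia.
    destruct Cn1 as [E|[E|[E|[E|[E|[E|E]]]]]]; subst n1.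
    + assert (Cv : (m2 = 0 /\ n2 = -1)%Z \/ (m2 = 1 /\ n2 = -7)%Z) by lia.
      destruct Cv as [[E E']|[E E']]; subst m2 n2.
      *
        assert (Ca1 : (a1 = 0 \/ a1 = 1 \/ a1 = 2 \/ a1 = 3 \/ a1 = 4)%Z) by lia.
        destruct Ca1 as [E|[E|[E|[E|E]]]]; subst a1.
        -- assert (Cb1 : (b1 = -3 \/ b1 = -2 \/ b1 = -1 \/ b1 = 0)%Z) by lia.
          destruct Cb1 as [E|[E|[E|E]]]; subst b1.
          ++
            nra.
          ++
            nra.
          ++
            nra.
          ++
            lia.
        -- assert (Cb1 : (b1 = -3 \/ b1 = -2 \/ b1 = -1 \/ b1 = 0)%Z) by lia.
          destruct Cb1 as [E|[E|[E|E]]]; subst b1.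
          ++
            assert (Cs : (a2 = -1 /\ b2 = 4)%Z \/ (a2 = 0 /\ b2 = 1)%Z) by lia.
            destruct Cs as [[E E']|[E E']]; subst a2 b2.
            **
              nra.
            **
              nra.
          ++
            nra.
          ++
            nra.
          ++
            nra.
        -- assert (Cb1 : (b1 = -3 \/ b1 = -2 \/ b1 = -1 \/ b1 = 0)%Z) by lia.
          destruct Cb1 as [E|[E|[E|E]]]; subst b1.
          ++
            nra.
          ++
            nra.
          ++
            nra.
          ++
            nra.
        -- assert (Cb1 : (b1 = -3 \/ b1 = -2 \/ b1 = -1 \/ b1 = 0)%Z) by lia.
          destruct Cb1 as [E|[E|[E|E]]]; subst b1.
          ++
            nra.
          ++
            nra.
          ++
            nra.
          ++
            nra.
        -- assert (Cb1 : (b1 = -3 \/ b1 = -2 \/ b1 = -1 \/ b1 = 0)%Z) by lia.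
          destruct Cb1 as [E|[E|[E|E]]]; subst b1.
          ++
            nra.
          ++
            nra.
          ++
            nra.
          ++
            nra.
      *
        nra.
    + assert (Cv : (m2 = 0 /\ n2 = -1)%Z \/ (m2 = 1 /\ n2 = -6)%Z) by lia.
      destruct Cv as [[E E']|[E E']]; subst m2 n2.
      *
        nra.
      *
        assert (Ca1 : (a1 = 0 \/ a1 = 1 \/ a1 = 2 \/ a1 = 3 \/ a1 = 4)%Z) by lia.
        destruct Ca1 as [E|[E|[E|[E|E]]]]; subst a1.
        -- assert (Cb1 : (b1 = -3 \/ b1 = -2 \/ b1 = -1 \/ b1 = 0)%Z) by lia.
          destruct Cb1 as [E|[E|[E|E]]]; subst b1.
          ++
            nra.
          ++
            nra.
          ++
            nra.
          ++
            lia.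
        -- assert (Cb1 : (b1 = -3 \/ b1 = -2 \/ b1 = -1 \/ b1 = 0)%Z) by lia.
          destruct Cb1 as [E|[E|[E|E]]]; subst b1.
          ++
            assert (Cs : (a2 = -1 /\ b2 = 4)%Z \/ (a2 = 0 /\ b2 = 1)%Z) by lia.
            destruct Cs as [[E E']|[E E']]; subst a2 b2.
            **
              nra.
            **
              nra.
          ++
            nra.
          ++
            nra.
          ++
            nra.
        -- assert (Cb1 : (b1 = -3 \/ b1 = -2 \/ b1 = -1 \/ b1 = 0)%Z) by lia.
          destruct Cb1 as [E|[E|[E|E]]]; subst b1.
          ++
            nra.
          ++
            nra.
          ++
            nra.
          ++
            nra.
        -- assert (Cb1 : (b1 = -3 \/ b1 = -2 \/ b1 = -1 \/ b1 = 0)%Z) by lia.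
          destruct Cb1 as [E|[E|[E|E]]]; subst b1.
          ++
            nra.
          ++
            nra.
          ++
            nra.
          ++
            nra.
        -- assert (Cb1 : (b1 = -3 \/ b1 = -2 \/ b1 = -1 \/ b1 = 0)%Z) by lia.
          destruct Cb1 as [E|[E|[E|E]]]; subst b1.
          ++
            nra.
          ++
            nra.
          ++
            nra.
          ++
            nra.
    + assert (Cv : (m2 = 0 /\ n2 = -1)%Z \/ (m2 = 1 /\ n2 = -5)%Z) by lia.
      destruct Cv as [[E E']|[E E']]; subst m2 n2.
      *
        nra.
      *
        nra.
    + assert (Cv : (m2 = 0 /\ n2 = -1)%Z \/ (m2 = 1 /\ n2 = -4)%Z \/ (m2 = 2 /\ n2 = -7)%Z) by lia.
      destruct Cv as [[E E']|[[E E']|[E E']]]; subst m2 n2.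
      *
        nra.
      *
        nra.
      *
        nra.
    + assert (Cv : (m2 = 0 /\ n2 = -1)%Z \/ (m2 = 1 /\ n2 = -3)%Z \/ (m2 = 2 /\ n2 = -5)%Z \/ (m2 = 3 /\ n2 = -7)%Z) by lia.
      destruct Cv as [[E E']|[[E E']|[[E E']|[E E']]]]; subst m2 n2.
      *
        nra.
      *
        nra.
      *
        nra.
      *
        nra.
    + assert (Cv : (m2 = 0 /\ n2 = -1)%Z \/ (m2 = 1 /\ n2 = -2)%Z \/ (m2 = 2 /\ n2 = -3)%Z \/ (m2 = 3 /\ n2 = -4)%Z \/ (m2 = 4 /\ n2 = -5)%Z \/ (m2 = 5 /\ n2 = -6)%Z \/ (m2 = 6 /\ n2 = -7)%Z) by lia.
      destruct Cv as [[E E']|[[E E']|[[E E']|[[E E']|[[E E']|[[E E']|[E E']]]]]]]; subst m2 n2.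
      *
        nra.
      *
        nra.
      *
        nra.
      *
        nra.
      *
        nra.
      *
        assert (Ca1 : (a1 = 0 \/ a1 = 1 \/ a1 = 2 \/ a1 = 3 \/ a1 = 4)%Z) by lia.
        destruct Ca1 as [E|[E|[E|[E|E]]]]; subst a1.
        -- assert (Cb1 : (b1 = -3 \/ b1 = -2 \/ b1 = -1 \/ b1 = 0)%Z) by lia.
          destruct Cb1 as [E|[E|[E|E]]]; subst b1.
          ++
            nra.
          ++
            nra.
          ++
            nra.
          ++
            lia.
        -- assert (Cb1 : (b1 = -3 \/ b1 = -2 \/ b1 = -1 \/ b1 = 0)%Z) by lia.
          destruct Cb1 as [E|[E|[E|E]]]; subst b1.
          ++
            nra.
          ++
            nra.
          ++
            assert (Cs : (a2 = -3 /\ b2 = 4)%Z \/ (a2 = -2 /\ b2 = 3)%Z \/ (a2 = -1 /\ b2 = 2)%Z \/ (a2 = 0 /\ b2 = 1)%Z) by lia.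
            destruct Cs as [[E E']|[[E E']|[[E E']|[E E']]]]; subst a2 b2.
            **
              nra.
            **
              nra.
            **
              nra.
            **
              nra.
          ++
            nra.
        -- assert (Cb1 : (b1 = -3 \/ b1 = -2 \/ b1 = -1 \/ b1 = 0)%Z) by lia.
          destruct Cb1 as [E|[E|[E|E]]]; subst b1.
          ++
            nra.
          ++
            lia.
          ++
            nra.
          ++
            nra.
        -- assert (Cb1 : (b1 = -3 \/ b1 = -2 \/ b1 = -1 \/ b1 = 0)%Z) by lia.
          destruct Cb1 as [E|[E|[E|E]]]; subst b1.
          ++
            lia.
          ++
            nra.
          ++
            nra.
          ++
            nra.
        -- assert (Cb1 : (b1 = -3 \/ b1 = -2 \/ b1 = -1 \/ b1 = 0)%Z) by lia.
          destruct Cb1 as [E|[E|[E|E]]]; subst b1.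
          ++
            nra.
          ++
            nra.
          ++
            nra.
          ++
            nra.
      *
        nra.
    + assert (Cv : (m2 = 0 /\ n2 = -1)%Z \/ (m2 = 1 /\ n2 = -1)%Z \/ (m2 = 2 /\ n2 = -1)%Z \/ (m2 = 3 /\ n2 = -1)%Z \/ (m2 = 4 /\ n2 = -1)%Z \/ (m2 = 5 /\ n2 = -1)%Z \/ (m2 = 6 /\ n2 = -1)%Z) by lia.
      destruct Cv as [[E E']|[[E E']|[[E E']|[[E E']|[[E E']|[[E E']|[E E']]]]]]]; subst m2 n2.
      *
        nra.
      *
        nra.
      *
        nra.
      *
        nra.
      *
        nra.
      *
        nra.
      *
        assert (Ca1 : (a1 = 0 \/ a1 = 1 \/ a1 = 2 \/ a1 = 3 \/ a1 = 4)%Z) by lia.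
        destruct Ca1 as [E|[E|[E|[E|E]]]]; subst a1.
        -- assert (Cb1 : (b1 = -3 \/ b1 = -2 \/ b1 = -1 \/ b1 = 0)%Z) by lia.
          destruct Cb1 as [E|[E|[E|E]]]; subst b1.
          ++
            nra.
          ++
            nra.
          ++
            nra.
          ++
            lia.
        -- assert (Cb1 : (b1 = -3 \/ b1 = -2 \/ b1 = -1 \/ b1 = 0)%Z) by lia.
          destruct Cb1 as [E|[E|[E|E]]]; subst b1.
          ++
            nra.
          ++
            nra.
          ++
            nra.
          ++
            assert (Cs : (a2 = -3 /\ b2 = 1)%Z \/ (a2 = -2 /\ b2 = 1)%Z \/ (a2 = -1 /\ b2 = 1)%Z \/ (a2 = 0 /\ b2 = 1)%Z) by lia.
            destruct Cs as [[E E']|[[E E']|[[E E']|[E E']]]]; subst a2 b2.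
            **
              nra.
            **
              nra.
            **
              nra.
            **
              nra.
        -- assert (Cb1 : (b1 = -3 \/ b1 = -2 \/ b1 = -1 \/ b1 = 0)%Z) by lia.
          destruct Cb1 as [E|[E|[E|E]]]; subst b1.
          ++
            nra.
          ++
            nra.
          ++
            nra.
          ++
            lia.
        -- assert (Cb1 : (b1 = -3 \/ b1 = -2 \/ b1 = -1 \/ b1 = 0)%Z) by lia.
          destruct Cb1 as [E|[E|[E|E]]]; subst b1.
          ++
            nra.
          ++
            nra.
          ++
            nra.
          ++
            lia.
        -- assert (Cb1 : (b1 = -3 \/ b1 = -2 \/ b1 = -1 \/ b1 = 0)%Z) by lia.
          destruct Cb1 as [E|[E|[E|E]]]; subst b1.
          ++
            nra.
          ++
            nra.
          ++
            nra.
          ++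
            nra.
  - assert (Cn1 : (n1 = -6 \/ n1 = -5 \/ n1 = -4 \/ n1 = -3 \/ n1 = -2 \/ n1 = -1 \/ n1 = 0)%Z) by lia.
    destruct Cn1 as [E|[E|[E|[E|[E|[E|E]]]]]]; subst n1.
    + lia.
    + assert (Cv : (m2 = 1 /\ n2 = -3)%Z) by lia.
      destruct Cv as [E E']; subst m2 n2.
      *
        nra.
    + lia.
    + assert (Cv : (m2 = 1 /\ n2 = -2)%Z \/ (m2 = 3 /\ n2 = -5)%Z) by lia.
      destruct Cv as [[E E']|[E E']]; subst m2 n2.
      *
        nra.
      *
        nra.
    + lia.
    + assert (Cv : (m2 = 1 /\ n2 = -1)%Z \/ (m2 = 3 /\ n2 = -2)%Z \/ (m2 = 5 /\ n2 = -3)%Z) by lia.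
      destruct Cv as [[E E']|[[E E']|[E E']]]; subst m2 n2.
      *
        nra.
      *
        nra.
      *
        nra.
    + lia.
  - assert (Cn1 : (n1 = -6 \/ n1 = -5 \/ n1 = -4 \/ n1 = -3 \/ n1 = -2 \/ n1 = -1 \/ n1 = 0)%Z) by lia.
    destruct Cn1 as [E|[E|[E|[E|[E|[E|E]]]]]]; subst n1.
    + lia.
    + assert (Cv : (m2 = 1 /\ n2 = -2)%Z \/ (m2 = 4 /\ n2 = -7)%Z) by lia.
      destruct Cv as [[E E']|[E E']]; subst m2 n2.
      *
        nra.
      *
        nra.
    + assert (Cv : (m2 = 2 /\ n2 = -3)%Z \/ (m2 = 5 /\ n2 = -7)%Z) by lia.
      destruct Cv as [[E E']|[E E']]; subst m2 n2.
      *
        nra.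
      *
        nra.
    + lia.
    + assert (Cv : (m2 = 1 /\ n2 = -1)%Z \/ (m2 = 4 /\ n2 = -3)%Z) by lia.
      destruct Cv as [[E E']|[E E']]; subst m2 n2.
      *
        nra.
      *
        nra.
    + assert (Cv : (m2 = 2 /\ n2 = -1)%Z \/ (m2 = 5 /\ n2 = -2)%Z) by lia.
      destruct Cv as [[E E']|[E E']]; subst m2 n2.
      *
        nra.
      *
        nra.
    + lia.
  - assert (Cn1 : (n1 = -6 \/ n1 = -5 \/ n1 = -4 \/ n1 = -3 \/ n1 = -2 \/ n1 = -1 \/ n1 = 0)%Z) by lia.
    destruct Cn1 as [E|[E|[E|[E|[E|[E|E]]]]]]; subst n1.
    + lia.
    + assert (Cv : (m2 = 3 /\ n2 = -4)%Z) by lia.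
      destruct Cv as [E E']; subst m2 n2.
      *
        nra.
    + lia.
    + assert (Cv : (m2 = 1 /\ n2 = -1)%Z \/ (m2 = 5 /\ n2 = -4)%Z) by lia.
      destruct Cv as [[E E']|[E E']]; subst m2 n2.
      *
        nra.
      *
        nra.
    + lia.
    + assert (Cv : (m2 = 3 /\ n2 = -1)%Z) by lia.
      destruct Cv as [E E']; subst m2 n2.
      *
        nra.
    + lia.
  - assert (Cn1 : (n1 = -6 \/ n1 = -5 \/ n1 = -4 \/ n1 = -3 \/ n1 = -2 \/ n1 = -1 \/ n1 = 0)%Z) by lia.
    destruct Cn1 as [E|[E|[E|[E|[E|[E|E]]]]]]; subst n1.
    + assert (Cv : (m2 = 4 /\ n2 = -5)%Z) by lia.
      destruct Cv as [E E']; subst m2 n2.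
      *
        assert (Ca1 : (a1 = 0 \/ a1 = 1 \/ a1 = 2 \/ a1 = 3 \/ a1 = 4)%Z) by lia.
        destruct Ca1 as [E|[E|[E|[E|E]]]]; subst a1.
        -- assert (Cb1 : (b1 = -3 \/ b1 = -2 \/ b1 = -1 \/ b1 = 0)%Z) by lia.
          destruct Cb1 as [E|[E|[E|E]]]; subst b1.
          ++
            nra.
          ++
            nra.
          ++
            nra.
          ++
            lia.
        -- assert (Cb1 : (b1 = -3 \/ b1 = -2 \/ b1 = -1 \/ b1 = 0)%Z) by lia.
          destruct Cb1 as [E|[E|[E|E]]]; subst b1.
          ++
            nra.
          ++
            nra.
          ++
            assert (Cs : (a2 = -3 /\ b2 = 4)%Z \/ (a2 = -2 /\ b2 = 3)%Z \/ (a2 = -1 /\ b2 = 2)%Z \/ (a2 = 0 /\ b2 = 1)%Z) by lia.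
            destruct Cs as [[E E']|[[E E']|[[E E']|[E E']]]]; subst a2 b2.
            **
              nra.
            **
              nra.
            **
              nra.
            **
              nra.
          ++
            nra.
        -- assert (Cb1 : (b1 = -3 \/ b1 = -2 \/ b1 = -1 \/ b1 = 0)%Z) by lia.
          destruct Cb1 as [E|[E|[E|E]]]; subst b1.
          ++
            nra.
          ++
            lia.
          ++
            nra.
          ++
            nra.
        -- assert (Cb1 : (b1 = -3 \/ b1 = -2 \/ b1 = -1 \/ b1 = 0)%Z) by lia.
          destruct Cb1 as [E|[E|[E|E]]]; subst b1.
          ++
            lia.
          ++
            nra.
          ++
            nra.
          ++
            nra.
        -- assert (Cb1 : (b1 = -3 \/ b1 = -2 \/ b1 = -1 \/ b1 = 0)%Z) by lia.
          destruct Cb1 as [E|[E|[E|E]]]; subst b1.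
          ++
            nra.
          ++
            nra.
          ++
            nra.
          ++
            nra.
    + lia.
    + assert (Cv : (m2 = 1 /\ n2 = -1)%Z \/ (m2 = 6 /\ n2 = -5)%Z) by lia.
      destruct Cv as [[E E']|[E E']]; subst m2 n2.
      *
        nra.
      *
        assert (Ca1 : (a1 = 0 \/ a1 = 1 \/ a1 = 2 \/ a1 = 3 \/ a1 = 4)%Z) by lia.
        destruct Ca1 as [E|[E|[E|[E|E]]]]; subst a1.
        -- assert (Cb1 : (b1 = -3 \/ b1 = -2 \/ b1 = -1 \/ b1 = 0)%Z) by lia.
          destruct Cb1 as [E|[E|[E|E]]]; subst b1.
          ++
            nra.
          ++
            nra.
          ++
            nra.
          ++
            lia.
        -- assert (Cb1 : (b1 = -3 \/ b1 = -2 \/ b1 = -1 \/ b1 = 0)%Z) by lia.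
          destruct Cb1 as [E|[E|[E|E]]]; subst b1.
          ++
            nra.
          ++
            nra.
          ++
            nra.
          ++
            nra.
        -- assert (Cb1 : (b1 = -3 \/ b1 = -2 \/ b1 = -1 \/ b1 = 0)%Z) by lia.
          destruct Cb1 as [E|[E|[E|E]]]; subst b1.
          ++
            nra.
          ++
            nra.
          ++
            nra.
          ++
            nra.
        -- assert (Cb1 : (b1 = -3 \/ b1 = -2 \/ b1 = -1 \/ b1 = 0)%Z) by lia.
          destruct Cb1 as [E|[E|[E|E]]]; subst b1.
          ++
            nra.
          ++
            assert (Cs : (a2 = -1 /\ b2 = 1)%Z) by lia.
            destruct Cs as [E E']; subst a2 b2.
            **
              nra.
          ++
            nra.
          ++
            nra.
        -- assert (Cb1 : (b1 = -3 \/ b1 = -2 \/ b1 = -1 \/ b1 = 0)%Z) by lia.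
          destruct Cb1 as [E|[E|[E|E]]]; subst b1.
          ++
            nra.
          ++
            nra.
          ++
            nra.
          ++
            nra.
    + assert (Cv : (m2 = 3 /\ n2 = -2)%Z) by lia.
      destruct Cv as [E E']; subst m2 n2.
      *
        nra.
    + assert (Cv : (m2 = 2 /\ n2 = -1)%Z) by lia.
      destruct Cv as [E E']; subst m2 n2.
      *
        nra.
    + assert (Cv : (m2 = 4 /\ n2 = -1)%Z) by lia.
      destruct Cv as [E E']; subst m2 n2.
      *
        nra.
    + lia.
  - assert (Cn1 : (n1 = -6 \/ n1 = -5 \/ n1 = -4 \/ n1 = -3 \/ n1 = -2 \/ n1 = -1 \/ n1 = 0)%Z) by lia.
    destruct Cn1 as [E|[E|[E|[E|[E|[E|E]]]]]]; subst n1.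
    + lia.
    + assert (Cv : (m2 = 1 /\ n2 = -1)%Z) by lia.
      destruct Cv as [E E']; subst m2 n2.
      *
        assert (Ca1 : (a1 = 0 \/ a1 = 1 \/ a1 = 2 \/ a1 = 3 \/ a1 = 4)%Z) by lia.
        destruct Ca1 as [E|[E|[E|[E|E]]]]; subst a1.
        -- assert (Cb1 : (b1 = -3 \/ b1 = -2 \/ b1 = -1 \/ b1 = 0)%Z) by lia.
          destruct Cb1 as [E|[E|[E|E]]]; subst b1.
          ++
            nra.
          ++
            nra.
          ++
            nra.
          ++
            lia.
        -- assert (Cb1 : (b1 = -3 \/ b1 = -2 \/ b1 = -1 \/ b1 = 0)%Z) by lia.
          destruct Cb1 as [E|[E|[E|E]]]; subst b1.
          ++
            nra.
          ++
            nra.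
          ++
            nra.
          ++
            nra.
        -- assert (Cb1 : (b1 = -3 \/ b1 = -2 \/ b1 = -1 \/ b1 = 0)%Z) by lia.
          destruct Cb1 as [E|[E|[E|E]]]; subst b1.
          ++
            nra.
          ++
            nra.
          ++
            nra.
          ++
            nra.
        -- assert (Cb1 : (b1 = -3 \/ b1 = -2 \/ b1 = -1 \/ b1 = 0)%Z) by lia.
          destruct Cb1 as [E|[E|[E|E]]]; subst b1.
          ++
            nra.
          ++
            assert (Cs : (a2 = -1 /\ b2 = 1)%Z) by lia.
            destruct Cs as [E E']; subst a2 b2.
            **
              nra.
          ++
            nra.
          ++
            nra.
        -- assert (Cb1 : (b1 = -3 \/ b1 = -2 \/ b1 = -1 \/ b1 = 0)%Z) by lia.
          destruct Cb1 as [E|[E|[E|E]]]; subst b1.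
          ++
            nra.
          ++
            nra.
          ++
            nra.
          ++
            nra.
    + lia.
    + lia.
    + lia.
    + assert (Cv : (m2 = 5 /\ n2 = -1)%Z) by lia.
      destruct Cv as [E E']; subst m2 n2.
      *
        assert (Ca1 : (a1 = 0 \/ a1 = 1 \/ a1 = 2 \/ a1 = 3 \/ a1 = 4)%Z) by lia.
        destruct Ca1 as [E|[E|[E|[E|E]]]]; subst a1.
        -- assert (Cb1 : (b1 = -3 \/ b1 = -2 \/ b1 = -1 \/ b1 = 0)%Z) by lia.
          destruct Cb1 as [E|[E|[E|E]]]; subst b1.
          ++
            nra.
          ++
            nra.
          ++
            nra.
          ++
            lia.
        -- assert (Cb1 : (b1 = -3 \/ b1 = -2 \/ b1 = -1 \/ b1 = 0)%Z) by lia.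
          destruct Cb1 as [E|[E|[E|E]]]; subst b1.
          ++
            nra.
          ++
            nra.
          ++
            nra.
          ++
            assert (Cs : (a2 = -3 /\ b2 = 1)%Z \/ (a2 = -2 /\ b2 = 1)%Z \/ (a2 = -1 /\ b2 = 1)%Z \/ (a2 = 0 /\ b2 = 1)%Z) by lia.
            destruct Cs as [[E E']|[[E E']|[[E E']|[E E']]]]; subst a2 b2.
            **
              nra.
            **
              nra.
            **
              nra.
            **
              nra.
        -- assert (Cb1 : (b1 = -3 \/ b1 = -2 \/ b1 = -1 \/ b1 = 0)%Z) by lia.
          destruct Cb1 as [E|[E|[E|E]]]; subst b1.
          ++
            nra.
          ++
            nra.
          ++
            nra.
          ++
            lia.
        -- assert (Cb1 : (b1 = -3 \/ b1 = -2 \/ b1 = -1 \/ b1 = 0)%Z) by lia.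
          destruct Cb1 as [E|[E|[E|E]]]; subst b1.
          ++
            nra.
          ++
            nra.
          ++
            nra.
          ++
            lia.
        -- assert (Cb1 : (b1 = -3 \/ b1 = -2 \/ b1 = -1 \/ b1 = 0)%Z) by lia.
          destruct Cb1 as [E|[E|[E|E]]]; subst b1.
          ++
            nra.
          ++
            nra.
          ++
            nra.
          ++
            nra.
    + lia.
  - assert (Cn1 : (n1 = -6 \/ n1 = -5 \/ n1 = -4 \/ n1 = -3 \/ n1 = -2 \/ n1 = -1 \/ n1 = 0)%Z) by lia.
    destruct Cn1 as [E|[E|[E|[E|[E|[E|E]]]]]]; subst n1.
    + assert (Cv : (m2 = 1 /\ n2 = -1)%Z) by lia.
      destruct Cv as [E E']; subst m2 n2.
      *
        nra.
    + assert (Cv : (m2 = 4 /\ n2 = -3)%Z) by lia.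
      destruct Cv as [E E']; subst m2 n2.
      *
        nra.
    + assert (Cv : (m2 = 5 /\ n2 = -3)%Z) by lia.
      destruct Cv as [E E']; subst m2 n2.
      *
        nra.
    + assert (Cv : (m2 = 2 /\ n2 = -1)%Z) by lia.
      destruct Cv as [E E']; subst m2 n2.
      *
        nra.
    + assert (Cv : (m2 = 3 /\ n2 = -1)%Z) by lia.
      destruct Cv as [E E']; subst m2 n2.
      *
        nra.
    + assert (Cv : (m2 = 6 /\ n2 = -1)%Z) by lia.
      destruct Cv as [E E']; subst m2 n2.
      *
        nra.
    + lia.
Qed.

Theorem lemma13 (a b c d : R) :
  0 <= a -> 0 <= b -> 0 <= c -> 0 <= d -> 0 < b ->
  is_lattice_basis a b c (- d) ->
  F0_piercing a b c (- d) ->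
  (forall u1 u2 v1 v2 : R, is_lattice_basis u1 u2 v1 v2 ->
     F0_piercing u1 u2 v1 v2 ->
     lattice_density a b c (- d) <= lattice_density u1 u2 v1 v2) ->
  a * d + b * c <= 31 / 6.
Proof.
  intros Ha Hb Hc Hd Hb0 Hbas Hpier _.
  destruct (Rle_lt_dec (a*d + b*c) (31/6)) as [|HA]; [assumption|]. exfalso.
  unfold is_lattice_basis in Hbas.
  assert (Edet : det2 a b c (-d) = -(a*d+b*c)) by (unfold det2; ring).
  assert (Habs : Rabs (det2 a b c (-d)) = a*d+b*c)
    by (rewrite Edet, Rabs_Ropp; apply Rabs_right; lra).
  assert (PH : forall x0 y0, exists x y, in_lattice a b c (-d) x y /\ x0 <= x <= x0 + 6 /\ y0 <= y <= y0 + 1).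
  { intros x0 y0. apply (Hpier (6,1)). simpl; auto. }
  assert (PS : forall x0 y0, exists x y, in_lattice a b c (-d) x y /\ x0 <= x <= x0 + 3 /\ y0 <= y <= y0 + 3).
  { intros x0 y0. apply (Hpier (3,3)). simpl; auto. }
  assert (PV : forall x0 y0, exists x y, in_lattice b a (-d) c x y /\ x0 <= x <= x0 + 6 /\ y0 <= y <= y0 + 1).
  { intros x0 y0. destruct (Hpier (1,6) ltac:(simpl; auto) y0 x0) as [x [y [[i [j [E1 E2]]] [H1 H2]]]].
    exists y, x. split; [exists i, j; split; assumption| simpl in *; lra]. }
  assert (HbasT : det2 b a (-d) c <> 0) by (unfold det2; lra).
  destruct (pair_lemma a b c (-d) 6 1 Hbas ltac:(lra) ltac:(lra) PH)
    as [x1 [y1 [x2 [z2 [L1 [L2 [Hx1 [Hx2 [Hy1 [Hz2 [Hsp Hdet]]]]]]]]]]].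
  destruct (basis_change a b c (-d) x1 y1 x2 z2 Hbas L1 L2 Hdet) as [HabsD Hrep].
  { rewrite Habs. rewrite Rabs_left1 by nra. nra. }
  rewrite Habs in HabsD. rewrite Rabs_left1 in HabsD by nra.
  destruct (pair_lemma b a (-d) c 6 1 HbasT ltac:(lra) ltac:(lra) PV)
    as [X1 [Y1 [X2 [Y2 [M1 [M2 [HX1 [HX2 [HY1 [HY2 [HYsp HYdet]]]]]]]]]]].
  destruct (Hrep Y1 X1 (lat_T _ _ _ _ _ _ M1)) as [m1 [n1 [Em1 En1]]].
  destruct (Hrep Y2 X2 (lat_T _ _ _ _ _ _ M2)) as [m2 [n2 [Em2 En2]]].
  destruct (pair_lemma a b c (-d) 3 3 Hbas ltac:(lra) ltac:(lra) PS)
    as [R1 [T1 [R2 [T2 [S1 [S2 [HR1 [HR2 [HT1 [HT2 [HTsp HTdet]]]]]]]]]]].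
  destruct (Hrep R1 T1 S1) as [a1 [b1 [Ea1 Eb1]]].
  destruct (Hrep R2 T2 S2) as [a2 [b2 [Ea2 Eb2]]].
  assert (e1 : IZR m1 * x1 + IZR n1 * x2 = Y1) by (rewrite Em1; ring).
  assert (e2 : IZR m1 * y1 - IZR n1 * - z2 = X1) by (rewrite En1; ring).
  assert (e3 : IZR m2 * x1 + IZR n2 * x2 = Y2) by (rewrite Em2; ring).
  assert (e4 : IZR m2 * y1 - IZR n2 * - z2 = X2) by (rewrite En2; ring).
  assert (e5 : IZR a1 * x1 + IZR b1 * x2 = R1) by (rewrite Ea1; ring).
  assert (e6 : IZR a1 * y1 - IZR b1 * - z2 = T1) by (rewrite Eb1; ring).
  assert (e7 : IZR a2 * x1 + IZR b2 * x2 = R2) by (rewrite Ea2; ring).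
  assert (e8 : IZR a2 * y1 - IZR b2 * - z2 = T2) by (rewrite Eb2; ring).
  apply (core x1 y1 x2 (-z2) m1 n1 m2 n2 a1 b1 a2 b2);
    rewrite ?e1, ?e2, ?e3, ?e4, ?e5, ?e6, ?e7, ?e8; try lra.
Qed.
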